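(* Let $\mathbf{X}\in\mathbb{R}^{n\times d}$ with rows $\mathbf{X}_1,\ldots,\mathbf{X}_n$ and columns $\mathbf{X}_{\cdot 1},\ldots,\mathbf{X}_{\cdot d}$, let $u$ be a utility function, $\lambda>0$, and let $$\mathcal{P}_\lambda(\mathbf{w})=-\frac1n\sum_{j=1}^n u(\mathbf{w}^{\top}\mathbf{X}_j)+\lambda\|\mathbf{w}\|_1,\qquad\mathcal{D}_\lambda(\boldsymbol{\theta})=\frac1n\sum_{j=1}^n u^*(n\lambda\theta_j),$$ with feasible sets $\mathcal{C}_P=\mathrm{dom}(\mathcal{P}_\lambda)\cap\mathbb{R}^d_+$ and $\mathcal{C}_D=\mathrm{dom}(\mathcal{D}_\lambda)\cap\{\boldsymbol{\theta}:\|\phi(\mathbf{X}^{\top}\boldsymbol{\theta})\|_\infty\leq1\}$; let $\mathbf{w}^*$ minimize $\mathcal{P}_\lambda$ over $\mathcal{C}_P$ and $\boldsymbol{\theta}^*$ maximize $\mathcal{D}_\lambda$ over $\mathcal{C}_D$. Suppose $\mathcal{D}_\lambda$ is $\alpha$-strongly concave. Then for any $(\mathbf{w},\boldsymbol{\theta})\in\mathcal{C}_P\times\mathcal{C}_D$, $\boldsymbol{\theta}^*\in\mathcal{B}(\boldsymbol{\theta},r)$ with $r=\sqrt{2\,\mathrm{Gap}_\lambda(\mathbf{w},\boldsymbol{\theta})/\alpha}$. Furthermore, for each $j\in[d]$: if $\phi(\mathbf{X}_{\cdot j}^{\top}\boldsymbol{\theta})+r\|\mathbf{X}_{\cdot j}\|_2<1$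 then $w_j^*=0$.
   Context: A utility function is an increasing concave function $u$; $u^*(\theta)=\inf_z\{\theta z-u(z)\}$ is its conjugate as used in the Fenchel–Rockafellar dual of $\min_{\mathbf{w}\geq0}\mathcal{P}_\lambda(\mathbf{w})$. $\phi(x)=\max\{x,0\}$ entrywise; $\mathrm{Gap}_\lambda(\mathbf{w},\boldsymbol{\theta})=\mathcal{P}_\lambda(\mathbf{w})-\mathcal{D}_\lambda(\boldsymbol{\theta})$; $\mathcal{B}(\boldsymbol{\theta},r)$ is the closed Euclidean ball of radius $r$ centered at $\boldsymbol{\theta}$. *)

(* Defs.v *)
From HB Require Import structures.
From mathcomp Require Import all_boot all_order all_algebra.
From mathcomp Require Import all_classical all_reals all_analysis.
Set Implicit Arguments. Unset Strict Implicit. Unset Printing Implicit Defensive.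
Import Order.TTheory GRing.Theory Num.Theory.
Local Open Scope classical_set_scope.
Local Open Scope ring_scope.

Section Defs.
Variable R : realType.

Definition phi (x : R) : R := Num.max x 0.

Definition l1norm (m : nat) (v : 'I_m -> R) : R := \sum_(i < m) `|v i|.
Definition l2norm (m : nat) (v : 'I_m -> R) : R := Num.sqrt (\sum_(i < m) v i ^+ 2).
Definition linfnorm (m : nat) (v : 'I_m -> R) : R := \big[Num.max/0]_(i < m) `|v i|.

Definition cball (m : nat) (c : 'I_m -> R) (r : R) : set ('I_m -> R) :=
  [set x | l2norm (fun i => x i - c i) <= r].

Definition rowdot (n d : nat) (X : 'M[R]_(n, d)) (w : 'I_d -> R) (j : 'I_n) : R :=
  \sum_(i < d) X j i * w i.
Definition coldot (n d : nat) (X : 'M[R]_(n, d)) (th : 'I_n -> R) (i : 'I_d) : R :=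
  \sum_(j < n) X j i * th j.
Definition colnorm (n d : nat) (X : 'M[R]_(n, d)) (i : 'I_d) : R :=
  l2norm (fun j => X j i).

Definition utility (u : R -> \bar R) : Prop :=
  [/\ (forall z, (u z < +oo)%E),
      (exists z, (-oo < u z)%E),
      (forall x y, x <= y -> (u x <= u y)%E) &
      (forall x y (t : R), (0 < t < 1)%R ->
         (t%:E * u x + (1 - t)%R%:E * u y <= u (t * x + (1 - t) * y)%R)%E)].

Definition uconj (u : R -> \bar R) (t : R) : \bar R :=
  ereal_inf (range (fun z : R => ((t * z)%:E - u z)%E)).

Definition Pprimal (n d : nat) (X : 'M[R]_(n, d)) (u : R -> \bar R) (lam : R)
    (w : 'I_d -> R) : \bar R :=
  (- ((n%:R)^-1)%:E * (\sum_(j < n) u (rowdot X w j)) + (lam * l1norm w)%:E)%E.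

Definition Ddual (n : nat) (u : R -> \bar R) (lam : R) (th : 'I_n -> R) : \bar R :=
  ((n%:R)^-1)%:E * (\sum_(j < n) uconj u (n%:R * lam * th j))%E.

Definition CP (n d : nat) (X : 'M[R]_(n, d)) (u : R -> \bar R) (lam : R) :
    set ('I_d -> R) :=
  [set w | (Pprimal X u lam w < +oo)%E /\ forall i, 0 <= w i].

Definition CD (n d : nat) (X : 'M[R]_(n, d)) (u : R -> \bar R) (lam : R) :
    set ('I_n -> R) :=
  [set th | (-oo < Ddual u lam th)%E /\ linfnorm (fun i => phi (coldot X th i)) <= 1].

Definition Gap (n d : nat) (X : 'M[R]_(n, d)) (u : R -> \bar R) (lam : R)
    (w : 'I_d -> R) (th : 'I_n -> R) : \bar R :=
  (Pprimal X u lam w - Ddual u lam th)%E.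

Definition strongly_concave (m : nat) (alpha : R) (F : ('I_m -> R) -> \bar R) : Prop :=
  0 < alpha /\
  forall x y (t : R), (0 < t < 1)%R ->
    (t%:E * F x + (1 - t)%R%:E * F y
      + (alpha / 2 * t * (1 - t) * (l2norm (fun i => (x i - y i)%R)) ^+ 2)%R%:E
     <= F (fun i => (t * x i + (1 - t) * y i)%R))%E.

End Defs.

(* Main.v *)
Require Import Defs.
From mathcomp Require Import all_boot all_order all_algebra.
From mathcomp Require Import all_classical all_reals all_analysis.
From mathcomp Require Import ring lra.
Set Implicit Arguments. Unset Strict Implicit. Unset Printing Implicit Defensive.
Import Order.TTheory GRing.Theory Num.Theory.
Local Open Scope classical_set_scope.
Local Open Scope ring_scope.

Section U.
Variable R : realType.
Variable u : R -> \bar R.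
Hypothesis Hu : utility u.

Local Notation f x := (fine (u x)).
Local Notation fin x := (u x \is a fin_num).

Lemma u_lt x : (u x < +oo)%E.
Proof. by case: Hu. Qed.

Lemma uE x : u x = -oo%E \/ (fin x /\ u x = (f x)%:E).
Proof. by move: (u_lt x); case: (u x) => [r| |] //= _; [right|left]. Qed.

Lemma u_mono x y : x <= y -> (u x <= u y)%E.
Proof. by case: Hu => _ _ H _; apply: H. Qed.

Lemma u_fin_mono x y : fin x -> x <= y -> fin y.
Proof.
move=> fx xy; have := u_mono xy; have := u_lt y; move: fx.
by case: (u x) => [a| |] //; case: (u y) => [b| |].
Qed.

Lemma u_conc a c t : fin a -> fin c -> 0 < t < 1 ->
  t * f a + (1 - t) * f c <= f (t * a + (1 - t) * c).
Proof.
move=> fa fc /andP[t0 t1].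
have fm : fin (t * a + (1 - t) * c).
  case: (leP a c) => ac.
    by apply: (u_fin_mono fa); nra.
  by apply: (u_fin_mono fc); nra.
case: Hu => _ _ _ /(_ a c t); rewrite t0 t1 => /(_ isT).
by rewrite -(fineK fa) -(fineK fc) -(fineK fm) -!EFinM -EFinD lee_fin.
Qed.

Lemma slope3 a b c : fin a -> a < b -> b < c ->
  (b - a) * (f c - f b) <= (c - b) * (f b - f a).
Proof.
move=> fa ab bc.
have fc : fin c by apply: (u_fin_mono fa); lra.
set t := (c - b) / (c - a).
have ca : c - a != 0 by apply/eqP; lra.
have t0 : 0 < t by rewrite /t divr_gt0 //; lra.
have t1 : t < 1 by rewrite /t ltr_pdivrMr; lra.
have eb : t * a + (1 - t) * c = b by rewrite /t; field.
have H := u_conc fa fc (t:=t); rewrite t0 t1 eb in H; have {}H := H isT.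
have e1 : c - b = t * (c - a) by rewrite /t; field.
have e2 : b - a = (1 - t) * (c - a) by rewrite /t; field.
rewrite e1 e2 -subr_ge0.
have -> : t * (c - a) * (f b - f a) - (1 - t) * (c - a) * (f c - f b)
   = (c - a) * (f b - (t * f a + (1 - t) * f c)) by ring.
by apply: mulr_ge0; lra.
Qed.


Lemma right_slope_le y z h : fin y -> y < z -> 0 < h ->
  (f (z + h) - f z) / h <= (f z - f y) / (z - y).
Proof.
move=> fy yz h0; have H := slope3 fy yz (c := z + h).
have e : z + h - z = h by ring.
rewrite e in H; have {}H := H ltac:(lra).
rewrite ler_pdivrMr // mulrAC ler_pdivlMr; last lra.
nra.
Qed.

Definition sg z t := forall y, (u y <= (f z + t * (y - z))%:E)%E.

Lemma sg_exists y0 z : fin y0 -> y0 < z -> exists t, sg z t.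
Proof.
move=> fy0 y0z.
have fz : fin z by apply: (u_fin_mono fy0); lra.
pose S := [set q | exists2 h, 0 < h & q = (f (z + h) - f z) / h].
have S0 : S !=set0 by exists ((f (z + 1) - f z) / 1); exists 1.
have Sub : forall y, fin y -> y < z -> ubound S ((f z - f y) / (z - y)).
  move=> y fy yz q [h h0 ->]; exact: right_slope_le.
have hS : has_sup S by split => //; exists ((f z - f y0) / (z - y0)); exact: Sub.
exists (sup S) => y.
case: (uE y) => [->|[fy ->]]; first exact: leNye.
rewrite lee_fin; case: (ltgtP y z) => yz.
- have := ge_sup S0 (Sub y fy yz); rewrite ler_pdivlMr; last lra.
  nra.
- have : S ((f y - f z) / (y - z)).
    exists (y - z); first lra.
    by have -> : z + (y - z) = y by ring.
  move/(sup_upper_bound hS); rewrite ler_pdivrMr; last lra.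
  nra.
- by rewrite yz subrr mulr0 addr0.
Qed.

Lemma uc_le t z : (uconj u t <= (t * z)%:E - u z)%E.
Proof. by apply: ereal_inf_lbound; exists z. Qed.

Lemma uc_lt t : (uconj u t < +oo)%E.
Proof.
case: Hu => _ [z0 hz0] _ _.
have fz0 : fin z0 by rewrite fin_numElt hz0 u_lt.
apply: (le_lt_trans (uc_le t z0)).
by rewrite -(fineK fz0) -EFinB ltry.
Qed.

Lemma uc_ge t M : (forall z, (M <= (t * z)%:E - u z)%E) -> (M <= uconj u t)%E.
Proof. by move=> H; apply: le_ereal_inf_tmp => _ [z _ <-]. Qed.

Lemma uc_sg z t : fin z -> sg z t -> uconj u t = (t * z - f z)%:E.
Proof.
move=> fz hs; apply/le_anti/andP; split.
  by have := uc_le t z; rewrite -(fineK fz) -EFinB.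
apply: uc_ge => y; case: (uE y) => [->|[fy ->]]; first by rewrite /= leey.
have := hs y; rewrite -(fineK fy) -EFinB !lee_fin => H; lra.
Qed.

Lemma lim1 (E K : R) : 0 <= K -> (forall s, 0 < s < 1 -> E + s * K <= 0) -> E + K <= 0.
Proof.
move=> K0 H; rewrite leNgt; apply/negP => EK.
have h2 := H (1/2) ltac:(apply/andP; split; lra).
have Kp : 0 < K by lra.
set s := 1 - (E + K) / (2 * K).
have e : s * K = K - (E + K) / 2 by rewrite /s; field; lra.
have s0 : 0 < s.
  rewrite /s subr_gt0 ltr_pdivrMr; lra.
have s1 : s < 1.
  rewrite /s; have : 0 < (E + K) / (2 * K) by apply: divr_gt0; lra.
  lra.
have := H s ltac:(apply/andP; split => //); rewrite e; lra.
Qed.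

Variable mu : R.
Hypothesis mu0 : 0 < mu.
Hypothesis SC : forall A B tau, uconj u A \is a fin_num -> uconj u B \is a fin_num ->
  0 < tau < 1 ->
  ((tau * fine (uconj u A) + (1 - tau) * fine (uconj u B)
     + mu / 2 * tau * (1 - tau) * (A - B) ^+ 2)%:E
   <= uconj u (tau * A + (1 - tau) * B))%E.

Lemma strong_sg z t s : fin z -> sg z t -> uconj u s \is a fin_num ->
  fine (uconj u s) <= t * z - f z + z * (s - t) - mu / 2 * (s - t) ^+ 2.
Proof.
move=> fz hs fs; have m0 := mu0.
have ut := uc_sg fz hs.
have ft : uconj u t \is a fin_num by rewrite ut.
set a := fine (uconj u s).
set E := a - (t * z - f z) - z * (s - t).
set K := mu / 2 * (s - t) ^+ 2.
suff : E + K <= 0 by rewrite /E /K; lra.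
apply: lim1; first by rewrite /K; apply: mulr_ge0; [apply: divr_ge0; lra| apply: sqr_ge0].
move=> sig /andP[sig0 sig1].
set tau := 1 - sig.
have tau0 : 0 < tau by rewrite /tau; lra.
have H := SC fs ft (tau := tau) ltac:(apply/andP; split; rewrite /tau; lra).
have H2 := le_trans H (uc_le _ z).
rewrite -(fineK fz) -EFinB lee_fin ut /= in H2.
rewrite -(pmulr_rle0 _ tau0).
have -> : tau * (E + sig * K) =
  (tau * a + (1 - tau) * (t * z - f z) + mu / 2 * tau * (1 - tau) * (s - t) ^+ 2)
  - ((tau * s + (1 - tau) * t) * z - f z).
  by rewrite /E /K /tau; ring.
by rewrite subr_le0.
Qed.

Lemma smooth z z' t t' : fin z -> fin z' -> sg z t -> sg z' t' ->
  - (z' - z) ^+ 2 <= mu * (f z' - f z - t * (z' - z)).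
Proof.
move=> fz fz' hs hs'; have m0 := mu0.
have ut := uc_sg fz hs; have ut' := uc_sg fz' hs'.
have H1 := strong_sg fz hs (s := t') ltac:(by rewrite ut').
have H2 := strong_sg fz' hs' (s := t) ltac:(by rewrite ut).
rewrite ut' /= in H1; rewrite ut /= in H2.
have H3 := hs' z; rewrite -(fineK fz) lee_fin in H3.
set h := z' - z in H1 H2 H3 *; set d := t - t' in H1 H2 H3 *.
have Hd : mu * d ^+ 2 <= h * d.
  have e1 : z' = z + h by rewrite /h; ring.
  have e2 : t' = t - d by rewrite /d; ring.
  rewrite e1 e2 in H1 H2; nra.
have H4 : f z' - f z - t * h >= - (h * d).
  have e1 : z' = z + h by rewrite /h; ring.
  have e2 : t' = t - d by rewrite /d; ring.
  rewrite e1 e2 in H3; nra.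
have H5 : mu * (h * d) <= h ^+ 2.
  have : 0 <= (h - mu * d) ^+ 2 by apply: sqr_ge0.
  have : mu * (mu * d ^+ 2) <= mu * (h * d) by rewrite ler_pM2l.
  nra.
nra.
Qed.

Lemma left_dom z : fin z -> exists2 y, y < z & fin y.
Proof.
move=> fz; have m0 := mu0; have [//|nH] := pselect (exists2 y, y < z & fin y).
have Hl : forall y, fin y -> z <= y.
  move=> y fy; rewrite leNgt; apply/negP => yz; apply: nH; by exists y.
have fz1 : fin (z + 1) by apply: (u_fin_mono fz); lra.
have [t1 hs1] := sg_exists fz (z := z + 1) ltac:(lra).
set s := t1 + 3 / mu.
have es : mu * (s - t1) = 3 by rewrite /s; field; lra.
have sp : 0 < s - t1 by rewrite /s addrC addKr; apply: divr_gt0; lra.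
set L := (s - t1) * z - f (z + 1) + t1 * (z + 1).
have lb : (L%:E <= uconj u s)%E.
  apply: uc_ge => y; case: (uE y) => [->|[fy ->]]; first by rewrite /= leey.
  have := hs1 y; rewrite -(fineK fy) -EFinB !lee_fin => H.
  have := Hl y fy => zy; rewrite /L; nra.
have fs : uconj u s \is a fin_num.
  by rewrite fin_numElt uc_lt andbT (lt_le_trans (ltNyr L) lb).
have H := strong_sg fz1 hs1 fs.
rewrite -(fineK fs) lee_fin in lb.
have : mu / 2 * (s - t1) ^+ 2 <= (s - t1) by rewrite /L in lb; nra.
nra.
Qed.

End U.
Section Main.
Variable R : realType.
Variables (n d : nat) (X : 'M[R]_(n, d)) (u : R -> \bar R) (lam : R).
Hypothesis Hn : (0 < n)%N.
Hypothesis Hu : utility u.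
Hypothesis Hlam : 0 < lam.

Local Notation f x := (fine (u x)).
Local Notation g t := (fine (uconj u t)).
Local Notation nl := (n%:R * lam).

Lemma nR0 : 0 < n%:R :> R.
Proof. by rewrite ltr0n. Qed.

Lemma nl0 : 0 < nl.
Proof. by rewrite mulr_gt0 // nR0. Qed.

Lemma D_fin (th : 'I_n -> R) : (-oo < Ddual u lam th)%E ->
  forall k, uconj u (nl * th k) \is a fin_num.
Proof.
move=> HD k; rewrite fin_numElt uc_lt // andbT ltNye; apply/eqP => Hk.
have : (\sum_(j < n) uconj u (nl * th j))%E = -oo%E.
  by apply/esum_eqNyP; exists k; split => //; exact: mem_index_enum.
move: HD; rewrite /Ddual => + E; rewrite E mulrNy gtr0_sg ?invr_gt0 ?nR0 //.
by rewrite mul1e.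
Qed.

Lemma D_real (th : 'I_n -> R) : (forall k, uconj u (nl * th k) \is a fin_num) ->
  Ddual u lam th = ((n%:R)^-1 * \sum_(k < n) g (nl * th k))%:E.
Proof.
move=> H; rewrite /Ddual; under eq_bigr => k _ do rewrite -(fineK (H k)).
by rewrite sumEFin -EFinM.
Qed.

Lemma P_fin (w : 'I_d -> R) : (Pprimal X u lam w < +oo)%E ->
  forall k, u (rowdot X w k) \is a fin_num.
Proof.
move=> HP k; rewrite fin_numElt u_lt // andbT ltNye; apply/eqP => Hk.
have : (\sum_(j < n) u (rowdot X w j))%E = -oo%E.
  by apply/esum_eqNyP; exists k; split => //; exact: mem_index_enum.
move: HP; rewrite /Pprimal => + E; rewrite E -EFinN mulrNy.
rewrite ltr0_sg ?oppr_lt0 ?invr_gt0 ?nR0 //.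
by rewrite EFinN mulN1e /=.
Qed.

Lemma P_real (w : 'I_d -> R) : (forall k, u (rowdot X w k) \is a fin_num) ->
  Pprimal X u lam w = (- (n%:R)^-1 * \sum_(k < n) f (rowdot X w k) + lam * l1norm w)%:E.
Proof.
move=> H; rewrite /Pprimal; under eq_bigr => k _ do rewrite -(fineK (H k)).
by rewrite sumEFin -EFinN -EFinM -EFinD.
Qed.

Lemma CD_col (th : 'I_n -> R) : linfnorm (fun i => phi (coldot X th i)) <= 1 <->
  forall i, coldot X th i <= 1.
Proof.
rewrite /linfnorm; split.
  move/bigmax_leP => [_ H] i; have := H i isT.
  rewrite /phi ger0_norm ?le_max ?lexx ?orbT // ge_max => /andP[] //.
move=> H; apply/bigmax_leP; split => // i _.
by rewrite /phi ger0_norm ?le_max ?lexx ?orbT // ge_max H ler01.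
Qed.

Lemma exch (a : 'I_n -> R) (w : 'I_d -> R) :
  \sum_(k < n) a k * rowdot X w k = \sum_(j < d) w j * coldot X a j.
Proof.
rewrite /rowdot /coldot.
under eq_bigr => k _ do rewrite mulr_sumr.
rewrite exchange_big /=; apply: eq_bigr => j _; rewrite mulr_sumr.
by apply: eq_bigr => k _; ring.
Qed.

Lemma l1_pos (w : 'I_d -> R) : (forall i, 0 <= w i) -> l1norm w = \sum_(i < d) w i.
Proof. by move=> H; rewrite /l1norm; apply: eq_bigr => i _; rewrite ger0_norm. Qed.

Lemma gap_sum (w : 'I_d -> R) (th : 'I_n -> R) : (forall i, 0 <= w i) ->
  (forall k, u (rowdot X w k) \is a fin_num) ->
  (forall k, uconj u (nl * th k) \is a fin_num) ->
  (forall i, coldot X th i <= 1) ->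
  lam * \sum_(i < d) (w i * (1 - coldot X th i)) <=
  (- (n%:R)^-1 * \sum_(k < n) f (rowdot X w k) + lam * l1norm w)
   - (n%:R)^-1 * \sum_(k < n) g (nl * th k).
Proof.
move=> w0 fw fth c1.
have n0 : n%:R != 0 :> R by rewrite gt_eqF // nR0.
have Hg k : g (nl * th k) <= nl * th k * rowdot X w k - f (rowdot X w k).
  have := uc_le u (nl * th k) (rowdot X w k).
  by rewrite -(fineK (fth k)) -(fineK (fw k)) -EFinB lee_fin.
have E1 : (- (n%:R)^-1 * \sum_(k < n) f (rowdot X w k) + lam * l1norm w)
   - (n%:R)^-1 * \sum_(k < n) g (nl * th k) =
   (n%:R)^-1 * \sum_(k < n) (- f (rowdot X w k) - g (nl * th k)) + lam * \sum_(i < d) w i.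
  rewrite l1_pos // big_split /= !sumrN; ring.
have E2 : (n%:R)^-1 * \sum_(k < n) (- (nl * th k * rowdot X w k)) + lam * \sum_(i < d) w i
   = lam * \sum_(i < d) (w i * (1 - coldot X th i)).
  rewrite sumrN mulrN.
  have -> : (n%:R)^-1 * \sum_(k < n) (nl * th k * rowdot X w k) =
            lam * \sum_(k < n) (th k * rowdot X w k).
    rewrite !mulr_sumr; apply: eq_bigr => k _; field => //.
  rewrite exch -mulrN -mulrDr; congr (_ * _).
  rewrite -sumrN -big_split /=; apply: eq_bigr => i _; ring.
rewrite E1.
set MID := (n%:R)^-1 * \sum_(k < n) (- (nl * th k * rowdot X w k)) + lam * \sum_(i < d) w i.
have H1 : lam * \sum_(i < d) (w i * (1 - coldot X th i)) <= MID by rewrite /MID E2.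
apply: (le_trans H1).
rewrite /MID lerD2r ler_pM2l ?invr_gt0 ?nR0 //; apply: ler_sum => k _.
have := Hg k; lra.
Qed.


Lemma gap_dec (w : 'I_d -> R) (th : 'I_n -> R) j : (forall i, 0 <= w i) ->
  (forall k, u (rowdot X w k) \is a fin_num) ->
  (forall k, uconj u (nl * th k) \is a fin_num) ->
  (forall i, coldot X th i <= 1) ->
  lam * (w j * (1 - coldot X th j)) <=
  (- (n%:R)^-1 * \sum_(k < n) f (rowdot X w k) + lam * l1norm w)
   - (n%:R)^-1 * \sum_(k < n) g (nl * th k).
Proof.
move=> w0 fw fth c1; apply: le_trans (gap_sum w0 fw fth c1).
rewrite ler_pM2l // (bigD1 j) //= lerDl; apply: sumr_ge0 => i _.
by apply: mulr_ge0 => //; rewrite subr_ge0.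
Qed.

Lemma weak_dual (w : 'I_d -> R) (th : 'I_n -> R) : (forall i, 0 <= w i) ->
  (forall k, u (rowdot X w k) \is a fin_num) ->
  (forall k, uconj u (nl * th k) \is a fin_num) ->
  (forall i, coldot X th i <= 1) ->
  (n%:R)^-1 * \sum_(k < n) g (nl * th k) <=
  - (n%:R)^-1 * \sum_(k < n) f (rowdot X w k) + lam * l1norm w.
Proof.
move=> w0 fw fth c1; rewrite -subr_ge0; apply: le_trans (gap_sum w0 fw fth c1).
apply: mulr_ge0; first exact: ltW.
apply: sumr_ge0 => i _; apply: mulr_ge0 => //; by rewrite subr_ge0.
Qed.

Lemma coldot_lin (x y : 'I_n -> R) (t : R) j :
  coldot X (fun i => t * x i + (1 - t) * y i) j = t * coldot X x j + (1 - t) * coldot X y j.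
Proof.
rewrite /coldot !mulr_sumr -big_split /=; apply: eq_bigr => k _; ring.
Qed.

Lemma l2sq m (v : 'I_m -> R) : l2norm v ^+ 2 = \sum_(i < m) v i ^+ 2.
Proof. by rewrite /l2norm sqr_sqrtr //; apply: sumr_ge0 => i _; apply: sqr_ge0. Qed.

Lemma cs m (a b : 'I_m -> R) : \sum_(k < m) a k * b k <= l2norm a * l2norm b.
Proof.
set sA := l2norm a; set sB := l2norm b; set P := \sum_(k < m) a k * b k.
have sA0 : 0 <= sA by apply: sqrtr_ge0.
have sB0 : 0 <= sB by apply: sqrtr_ge0.
have zero (v : 'I_m -> R) : l2norm v = 0 -> forall k, v k = 0.
  move=> H k; have := l2sq v; rewrite H expr0n /= => /esym/psumr_eq0P H2.
  by apply/eqP; rewrite -sqrf_eq0; apply/eqP; apply: H2 => // i _; apply: sqr_ge0.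
have [eA|pA] := eqVneq sA 0.
  rewrite eA mul0r /P big1 // => k _; by rewrite (zero a eA) mul0r.
have [eB|pB] := eqVneq sB 0.
  rewrite eB mulr0 /P big1 // => k _; by rewrite (zero b eB) mulr0.
have sAB : 0 < sA * sB by apply: mulr_gt0; rewrite lt0r ?pA ?pB...
have H : 0 <= \sum_(k < m) (sB * a k - sA * b k) ^+ 2 by apply: sumr_ge0 => k _; apply: sqr_ge0.
have e1 : \sum_(k < m) (sB * a k - sA * b k) ^+ 2 =
   sB ^+ 2 * \sum_(k < m) a k ^+ 2 - 2 * (sA * sB) * P + sA ^+ 2 * \sum_(k < m) b k ^+ 2.
  rewrite /P !mulr_sumr -sumrB -big_split /=; apply: eq_bigr => k _; ring.
rewrite e1 in H.
rewrite -!l2sq -/sA -/sB in H.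
have e2 : sB ^+ 2 * sA ^+ 2 - 2 * (sA * sB) * P + sA ^+ 2 * sB ^+ 2
   = 2 * (sA * sB) * (sA * sB - P) by ring.
rewrite e2 in H.
by move: H; rewrite pmulr_rge0 ?subr_ge0 // mulr_gt0.
Qed.
Lemma SC_of_D alpha (b : 'I_n -> R) : strongly_concave alpha (@Ddual R n u lam) ->
  (forall k, uconj u (nl * b k) \is a fin_num) ->
  forall A B tau : R, uconj u A \is a fin_num -> uconj u B \is a fin_num -> 0 < tau < 1 ->
  ((tau * g A + (1 - tau) * g B
     + (alpha / (n%:R * lam ^+ 2)) / 2 * tau * (1 - tau) * (A - B) ^+ 2)%:E
   <= uconj u (tau * A + (1 - tau) * B))%E.
Proof.
move=> [a0 SCD] fb A B tau fA fB t01.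
have n0 : n%:R != 0 :> R by rewrite gt_eqF // nR0.
have nl0' : nl != 0 by rewrite gt_eqF // nl0.
have l0 : lam != 0 by rewrite gt_eqF.
have eq1 a c : nl * (tau * (a / nl) + (1 - tau) * (c / nl)) = tau * a + (1 - tau) * c.
  by field; rewrite ?l0 ?n0.
have eq2 a c S : n%:R * (tau * ((n%:R)^-1 * (a + S)) + (1 - tau) * ((n%:R)^-1 * (c + S)) +
       alpha / 2 * tau * (1 - tau) * (A / nl - B / nl) ^+ 2)
       = tau * a + (1 - tau) * c + alpha / (n%:R * lam ^+ 2) / 2 * tau * (1 - tau) * (A - B) ^+ 2 + S.
  by field; rewrite ?l0 ?n0.
have eq3 (r S : R) : n%:R * ((n%:R)^-1 * (r + S)) = r + S by field; rewrite ?l0 ?n0.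
set k : 'I_n := Ordinal Hn.
pose x := fun i : 'I_n => if i == k then A / nl else b i.
pose y := fun i : 'I_n => if i == k then B / nl else b i.
have fx i : uconj u (nl * x i) \is a fin_num.
  by rewrite /x; case: eqP => _ //; rewrite mulrC divfK.
have fy i : uconj u (nl * y i) \is a fin_num.
  by rewrite /y; case: eqP => _ //; rewrite mulrC divfK.
set S := \sum_(i < n | i != k) g (nl * b i).
have Dx : Ddual u lam x = ((n%:R)^-1 * (g A + S))%:E.
  rewrite D_real // (bigD1 k) //=; congr ((_ * (_ + _))%:E).
    by rewrite /x eqxx mulrC divfK.
  by apply: eq_bigr => i ik; rewrite /x (negbTE ik).
have Dy : Ddual u lam y = ((n%:R)^-1 * (g B + S))%:E.
  rewrite D_real // (bigD1 k) //=; congr ((_ * (_ + _))%:E).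
    by rewrite /y eqxx mulrC divfK.
  by apply: eq_bigr => i ik; rewrite /y (negbTE ik).
have Dm : Ddual u lam (fun i => tau * x i + (1 - tau) * y i) =
    (((n%:R)^-1)%:E * (uconj u (tau * A + (1 - tau) * B) + S%:E))%E.
  rewrite /Ddual (bigD1 k) //=; congr (_ * (_ + _))%E.
    by rewrite /x /y eqxx eq1.
  rewrite /S -sumEFin; apply: eq_bigr => i ik; rewrite /x /y (negbTE ik).
  by rewrite (_ : tau * b i + (1 - tau) * b i = b i) ?fineK //; ring.
have L2 : l2norm (fun i => x i - y i) ^+ 2 = (A / nl - B / nl) ^+ 2.
  rewrite /l2norm sqr_sqrtr; last by apply: sumr_ge0 => i _; apply: sqr_ge0.
  rewrite (bigD1 k) //= big1 ?addr0; first by rewrite /x /y eqxx.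
  by move=> i ik; rewrite /x /y (negbTE ik) subrr expr0n.
have H := SCD x y tau t01.
rewrite Dx Dy Dm L2 -!EFinM -!EFinD in H.
move: H; case E: (uconj u (tau * A + (1 - tau) * B)) => [r| |] H.
- rewrite lee_fin; rewrite -EFinD -EFinM lee_fin in H.
  rewrite -(ler_pM2l nR0) in H.
  rewrite eq2 eq3 in H; lra.
- by have := uc_lt Hu (tau * A + (1 - tau) * B); rewrite E.
- move: H; rewrite /= mulrNy gtr0_sg ?invr_gt0 ?nR0 // mul1e.
  by rewrite leeNy_eq.
Qed.

Lemma lim0 (A Q dl : R) : 0 < dl -> 0 <= Q ->
  (forall s, 0 < s < dl -> A <= s * Q) -> A <= 0.
Proof.
move=> dl0 Q0 H; rewrite leNgt; apply/negP => A0.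
have den0 : 0 < 2 * (A + dl * Q) by nra.
set s := dl * A / (2 * (A + dl * Q)).
have s0 : 0 < s by rewrite /s divr_gt0 // mulr_gt0.
have s1 : s < dl by rewrite /s ltr_pdivrMr //; nra.
have := H s ltac:(by rewrite s0 s1).
have : s * Q < A by rewrite /s mulrAC ltr_pdivrMr //; nra.
lra.
Qed.

Lemma rowdot_pert (w : 'I_d -> R) (s : R) (j : 'I_d) k :
  rowdot X (fun i => w i + s * (i == j)%:R) k = rowdot X w k + s * X k j.
Proof.
rewrite /rowdot; under eq_bigr do rewrite mulrDr; rewrite big_split /=.
congr (_ + _); rewrite (bigD1 j) //= eqxx mulr1 big1 ?addr0; first by rewrite mulrC.
by move=> i ij; rewrite (negbTE ij) mulr0 mulr0.
Qed.

Lemma pert_pos (w : 'I_d -> R) (s : R) (j : 'I_d) :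
  (forall i, 0 <= w i) -> 0 <= w j + s -> forall i, 0 <= w i + s * (i == j)%:R.
Proof.
move=> w0 ws i; case: (eqVneq i j) => [->|ij]; first by rewrite mulr1.
by rewrite mulr0 addr0.
Qed.

Lemma l1_pert (w : 'I_d -> R) (s : R) (j : 'I_d) :
  (forall i, 0 <= w i) -> 0 <= w j + s ->
  l1norm (fun i => w i + s * (i == j)%:R) = l1norm w + s.
Proof.
move=> w0 ws; rewrite !l1_pos //; last exact: pert_pos.
rewrite big_split /=; congr (_ + _).
rewrite (bigD1 j) //= eqxx mulr1 big1 ?addr0 //.
by move=> i ij; rewrite (negbTE ij) mulr0.
Qed.

Lemma kkt alpha (bs : 'I_n -> R) (ws : 'I_d -> R) :
  strongly_concave alpha (@Ddual R n u lam) ->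
  (forall k, uconj u (nl * bs k) \is a fin_num) ->
  CP X u lam ws ->
  (forall w, CP X u lam w -> (Pprimal X u lam ws <= Pprimal X u lam w)%E) ->
  exists th : 'I_n -> R, CD X u lam th /\ Ddual u lam th = Pprimal X u lam ws.
Proof.
move=> Hsc Hb [Pws ws0] Hopt.
have a0 : 0 < alpha by case: Hsc.
have n0 : n%:R != 0 :> R by rewrite gt_eqF // nR0.
have nl0' : 0 < nl := nl0.
have SCu := SC_of_D Hsc Hb.
set mu := alpha / (n%:R * lam ^+ 2) in SCu.
have mu0 : 0 < mu by rewrite /mu divr_gt0 // mulr_gt0 ?nR0 // exprn_gt0.
have sgx z : u z \is a fin_num -> exists t, sg u z t.
  move=> fz; have [y yz fy] := left_dom Hu mu0 SCu fz.
  exact: (sg_exists Hu fy yz).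
have fz := P_fin Pws.
have [t Ht] := choice (fun k => sgx _ (fz k)).
have Hy0 : forall k, exists y, y < rowdot X ws k /\ u y \is a fin_num.
  move=> k; have [y yz fy] := left_dom Hu mu0 SCu (fz k); by exists y.
have [yk Hy] := choice Hy0.
set z := rowdot X ws in fz Ht Hy.
set m := \big[Num.min/1]_k (z k - yk k).
have m0 : 0 < m.
  by apply/bigmin_gtP; split => // k _; have := (Hy k).1; rewrite subr_gt0.
have mle k : m <= z k - yk k by exact: bigmin_le.
have Gj j : coldot X t j <= nl /\ (0 < ws j -> nl <= coldot X t j).
  set G := coldot X t j.
  set Q := \sum_(k < n) X k j ^+ 2.
  have Q0 : 0 <= Q by apply: sumr_ge0 => k _; apply: sqr_ge0.
  set M := 1 + \big[Num.max/0]_k `|X k j|.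
  have XM k : `|X k j| < M.
    by rewrite /M addrC ltr_pwDr // (le_bigmax _ (fun k => `|X k j|) k).
  have M0 : 0 < M by have := XM (Ordinal Hn); have := normr_ge0 (X (Ordinal Hn) j); lra.
  set dl := m / M.
  have dl0 : 0 < dl by rewrite /dl divr_gt0.
  have pert s : `|s| < dl -> 0 <= ws j + s ->
      s * (mu * G) - s ^+ 2 * Q <= mu * nl * s.
    move=> sd wsj.
    set w' := fun i => ws i + s * (i == j)%:R.
    have rw k : rowdot X w' k = z k + s * X k j := rowdot_pert ws s j k.
    have fz' k : u (z k + s * X k j) \is a fin_num.
      apply: (u_fin_mono Hu (proj2 (Hy k))).
      have h1 : `|s * X k j| < m.
        rewrite normrM.
        have : `|s| * `|X k j| <= `|s| * M by rewrite ler_wpM2l // ltW.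
        have : `|s| * M < dl * M by rewrite ltr_pM2r.
        rewrite /dl divfK ?gt_eqF //; lra.
      have h2 := lerNnormlW (lexx `|s * X k j|).
      have := mle k; lra.
    have fw' k : u (rowdot X w' k) \is a fin_num by rewrite rw.
    have CPw' : CP X u lam w'.
      by split; [rewrite P_real // ltry | exact: pert_pos].
    have := Hopt _ CPw'; rewrite P_real // P_real // lee_fin l1_pert //.
    move=> Hop.
    have e : \sum_(k < n) fine (u (rowdot X w' k)) = \sum_(k < n) fine (u (z k + s * X k j)).
      by apply: eq_bigr => k _; rewrite rw.
    rewrite e in Hop.
    set S1 := \sum_(k < n) fine (u (z k + s * X k j)) in Hop.
    set S0 := \sum_(k < n) fine (u (z k)) in Hop.
    have Hsm : \sum_(k < n) (- (s * X k j) ^+ 2) <=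
        \sum_(k < n) mu * (fine (u (z k + s * X k j)) - fine (u (z k)) - t k * (s * X k j)).
      apply: ler_sum => k _; have [t' Ht'] := sgx _ (fz' k).
      have := smooth Hu mu0 SCu (fz k) (fz' k) (Ht k) Ht'.
      by rewrite (_ : z k + s * X k j - z k = s * X k j) //; ring.
    have e1 : \sum_(k < n) (- (s * X k j) ^+ 2) = - (s ^+ 2 * Q).
      rewrite sumrN mulr_sumr; congr (- _); apply: eq_bigr => k _; ring.
    have e2 : \sum_(k < n) mu * (fine (u (z k + s * X k j)) - fine (u (z k)) - t k * (s * X k j))
        = mu * (S1 - S0 - s * G).
      rewrite -mulr_sumr; congr (_ * _); rewrite !big_split /= !sumrN.
      congr (_ - _ - _); rewrite /G /coldot mulr_sumr; apply: eq_bigr => k _; ring.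
    rewrite e1 e2 in Hsm.
    have Hd : (n%:R)^-1 * (S1 - S0) <= lam * s by lra.
    have Hd2 : S1 - S0 <= nl * s.
      have -> : S1 - S0 = n%:R * ((n%:R)^-1 * (S1 - S0)) by field; rewrite n0.
      by rewrite -mulrA ler_pM2l ?nR0.
    have : mu * (S1 - S0) <= mu * (nl * s) by rewrite ler_pM2l.
    nra.
  split.
    have : mu * (G - nl) <= 0.
      apply: (lim0 dl0 Q0) => s /andP[s0 s1].
      have := pert s ltac:(by rewrite gtr0_norm) ltac:(by have := ws0 j; lra).
      nra.
    by rewrite pmulr_rle0 // subr_le0.
  move=> wj0.
  have : mu * (nl - G) <= 0.
    have dl1 : 0 < Num.min dl (ws j) by rewrite lt_min dl0.
    apply: (lim0 dl1 Q0) => s /andP[s0]; rewrite lt_min => /andP[s1 s2].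
    have := pert (- s) ltac:(by rewrite normrN gtr0_norm) ltac:(by lra).
    nra.
  by rewrite pmulr_rle0 // subr_le0.
pose th := fun k => t k / nl.
have nlth k : nl * th k = t k by rewrite /th mulrC divfK // gt_eqF.
have ucth k : uconj u (nl * th k) = (t k * z k - fine (u (z k)))%:E.
  by rewrite nlth (uc_sg Hu (fz k) (Ht k)).
have fth k : uconj u (nl * th k) \is a fin_num by rewrite ucth.
exists th; split.
  split; first by rewrite D_real // ltNyr.
  apply/CD_col => i; rewrite /coldot.
  have -> : \sum_(j < n) X j i * th j = coldot X t i / nl.
    by rewrite /coldot mulr_suml; apply: eq_bigr => k _; rewrite /th mulrA.
  by rewrite ler_pdivrMr // mul1r; case: (Gj i).
rewrite D_real // P_real //; congr (_%:E).
under eq_bigr do rewrite ucth /=.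
rewrite big_split /= sumrN.
have -> : \sum_(k < n) t k * z k = nl * l1norm ws.
  rewrite exch l1_pos // mulr_sumr; apply: eq_bigr => j _.
  have := ws0 j; rewrite le_eqVlt => /orP[/eqP <-|wj]; first by rewrite !mul0r mulr0.
  have [h1 h2] := Gj j; have -> : coldot X t j = nl by apply/le_anti; rewrite h1 h2.
  by rewrite mulrC.
by field; rewrite n0.
Qed.

Lemma main_sec alpha (wstar : 'I_d -> R) (thstar : 'I_n -> R) :
  CP X u lam wstar ->
  (forall w, CP X u lam w -> (Pprimal X u lam wstar <= Pprimal X u lam w)%E) ->
  CD X u lam thstar ->
  (forall th, CD X u lam th -> (Ddual u lam th <= Ddual u lam thstar)%E) ->
  strongly_concave alpha (@Ddual R n u lam) ->
  forall (w : 'I_d -> R) (th : 'I_n -> R),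
    CP X u lam w -> CD X u lam th ->
    let r := Num.sqrt (2 * fine (Gap X u lam w th) / alpha) in
    cball th r thstar /\
    (forall j : 'I_d, phi (coldot X th j) + r * colnorm X j < 1 -> wstar j = 0).
Proof.
move=> CPws Hopt [Dts cts] Hoptth Hsc w th [Pw w0] [Dth cth] r.
have a0 : 0 < alpha by case: Hsc.
have fts := D_fin Dts; have fth := D_fin Dth; have fw := P_fin Pw.
move/CD_col: cts => cts; move/CD_col: cth => cth.
have Dth_e := D_real fth; have Dts_e := D_real fts; have Pw_e := P_real fw.
set a := (n%:R)^-1 * \sum_(k < n) fine (uconj u (nl * th k)) in Dth_e.
set as_ := (n%:R)^-1 * \sum_(k < n) fine (uconj u (nl * thstar k)) in Dts_e.
set p := - (n%:R)^-1 * \sum_(k < n) fine (u (rowdot X w k)) + lam * l1norm w in Pw_e.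
have gap_e : fine (Gap X u lam w th) = p - a by rewrite /Gap Dth_e Pw_e.
have wd : as_ <= p := weak_dual w0 fw fts cts.
set N2 := \sum_(k < n) (thstar k - th k) ^+ 2.
have N20 : 0 <= N2 by apply: sumr_ge0 => k _; apply: sqr_ge0.
have key : a - as_ + alpha / 2 * N2 <= 0.
  apply: lim1 => [|s /andP[s0 s1]].
    by apply: mulr_ge0 => //; apply: divr_ge0 => //; apply: ltW.
  have H := (proj2 Hsc) thstar th s ltac:(by rewrite s0 s1).
  rewrite Dts_e Dth_e l2sq -!EFinM -!EFinD in H.
  have Dmid : (Ddual u lam (fun i => (s * thstar i + (1 - s) * th i)%R) <= as_%:E)%E.
    rewrite -Dts_e; apply: Hoptth; split.
      exact: (lt_le_trans (ltNyr _) H).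
    apply/CD_col => i; rewrite coldot_lin.
    have := cts i; have := cth i; nra.
  have := le_trans H Dmid; rewrite lee_fin => H2.
  have s1' : 0 < 1 - s by rewrite subr_gt0.
  rewrite -(pmulr_rle0 _ s1').
  have e : (1 - s) * (a - as_ + s * (alpha / 2 * N2)) =
     (s * as_ + (1 - s) * a + alpha / 2 * s * (1 - s) * N2) - as_ by ring.
  by rewrite e subr_le0.
have N2le : N2 <= 2 * (p - a) / alpha.
  rewrite ler_pdivlMr //.
  have : alpha / 2 * N2 = (alpha * N2) / 2 by rewrite mulrAC.
  move=> e; rewrite e in key.
  have : alpha * N2 / 2 <= p - a by lra.
  rewrite ler_pdivrMr //; lra.
have ball : l2norm (fun k => thstar k - th k) <= r.
  by rewrite /r gap_e /l2norm; apply: ler_wsqrtr.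
split; first exact: ball.
move=> j Hj.
have cs1 : coldot X thstar j - coldot X th j <= colnorm X j * r.
  have e : coldot X thstar j - coldot X th j = \sum_(k < n) X k j * (thstar k - th k).
    by rewrite /coldot -sumrB; apply: eq_bigr => k _; ring.
  rewrite e; apply: le_trans (cs _ _) _; rewrite /colnorm.
  by apply: ler_wpM2l => //; apply: sqrtr_ge0.
have phi_ge : coldot X th j <= phi (coldot X th j) by rewrite /phi le_max lexx.
have cj : coldot X thstar j < 1 by move: Hj; rewrite mulrC; lra.
have [th2 [CD2 E2]] := kkt Hsc fts CPws Hopt.
have le2 := Hoptth th2 CD2; rewrite E2 in le2.
case: CPws => Pws ws0.
have fws := P_fin Pws.
have gd := gap_dec j ws0 fws fts cts.
rewrite P_real // Dts_e lee_fin in le2.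
have : lam * (wstar j * (1 - coldot X thstar j)) <= 0 by move: le2 gd; rewrite /as_; lra.
rewrite pmulr_rle0 // pmulr_lle0 ?subr_gt0 // => wj.
by apply/le_anti; rewrite wj ws0.
Qed.

End Main.

Theorem theorem4 (R : realType) (n d : nat) (X : 'M[R]_(n, d))
  (u : R -> \bar R) (lam alpha : R)
  (wstar : 'I_d -> R) (thstar : 'I_n -> R) :
  (0 < n)%N ->
  utility u ->
  0 < lam ->
  CP X u lam wstar ->
  (forall w, CP X u lam w -> (Pprimal X u lam wstar <= Pprimal X u lam w)%E) ->
  CD X u lam thstar ->
  (forall th, CD X u lam th -> (Ddual u lam th <= Ddual u lam thstar)%E) ->
  strongly_concave alpha (@Ddual R n u lam) ->
  forall (w : 'I_d -> R) (th : 'I_n -> R),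
    CP X u lam w -> CD X u lam th ->
    let r := Num.sqrt (2 * fine (Gap X u lam w th) / alpha) in
    cball th r thstar /\
    (forall j : 'I_d, phi (coldot X th j) + r * colnorm X j < 1 -> wstar j = 0).
Proof.
move=> Hn Hu Hlam; exact: main_sec.
Qed.
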